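(* For every positive integer $n$, $$\Psi_n(0)=\begin{cases}0&\text{if } n=2;\\ p&\text{if } n=2p^\alpha \text{ for some prime } p \text{ and some positive integer } \alpha;\\ 1&\text{otherwise}.\end{cases}$$
   Context: The Fibonacci polynomials are defined by $F_1(x)=1$, $F_2(x)=x$, and $F_n(x)=xF_{n-1}(x)+F_{n-2}(x)$ for $n\geq 3$. For $n\geq 2$, the $n$-th fibotomic polynomial $\Psi_n(x)\in\mathbb{Z}[x]$ is the product of the monic irreducible factors of $F_n(x)$ which are not factors of $F_k(x)$ for any $k<n$; also $\Psi_1(x)=1$. Thus $F_n(x)=\prod_{d\mid n}\Psi_d(x)$ for all $n\geq1$. *)

(* Defs.v *)
From HB Require Import structures.
From mathcomp Require Import all_boot all_order all_algebra.
Set Implicit Arguments. Unset Strict Implicit. Unset Printing Implicit Defensive.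
Import Order.TTheory GRing.Theory Num.Theory.
Local Open Scope ring_scope.

Fixpoint fib_poly (n : nat) : {poly int} :=
  match n with
  | 0%N => 0
  | 1%N => 1
  | (m.+1 as k).+1 => 'X * fib_poly k + fib_poly m
  end.

Definition new_factor (n : nat) (q : {poly int}) : Prop :=
  [/\ q \is monic, irreducible_poly q, q %| fib_poly n
    & forall k : nat, (1 <= k < n)%N -> ~~ (q %| fib_poly k)].

(* s is an enumeration (without repetition) of the monic irreducible factors
   of F_n that are not factors of any F_k, k < n; Psi_n = \prod_(q <- s) q. *)
Definition fibotomic_factors (n : nat) (s : seq {poly int}) : Prop :=
  uniq s /\ (forall q : {poly int}, q \in s <-> new_factor n q).

(* Main.v *)
Require Import Defs.
From HB Require Import structures.
From mathcomp Require Import all_boot all_order all_algebra.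
From mathcomp Require Import ring zify.
From Stdlib Require Import Classical_Prop.
Import Order.TTheory GRing.Theory Num.Theory.
Local Open Scope ring_scope.

Notation f := fib_poly.

Lemma fS2 n : f n.+2 = 'X * f n.+1 + f n.
Proof. by []. Qed.

Lemma f_size_monic_aux n :
  (size (f n.+1) = n.+1 /\ f n.+1 \is monic) /\
  (size (f n.+2) = n.+2 /\ f n.+2 \is monic).
Proof.
elim: n => [|n [[s0 m0] [s1 m1]]].
  by rewrite /= mulr1 addr0 size_poly1 monic1 size_polyX monicX.
split=> //.
have hX : size ('X * f n.+2) = n.+3.
  by rewrite mulrC size_mulX ?s1 // monic_neq0.
have hs : (size (f n.+1) < size ('X * f n.+2)%R)%N by rewrite hX s0.
rewrite fS2 size_addl // hX; split => //.
by apply/monicP; rewrite lead_coefDl // mulrC lead_coefMX; apply/monicP.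
Qed.

Lemma f_size n : size (f n) = n.
Proof. by case: n => [|n]; [rewrite size_poly0 | case: (f_size_monic_aux n) => [[]]]. Qed.

Lemma f_monic n : f n.+1 \is monic.
Proof. by case: (f_size_monic_aux n) => [[]]. Qed.

Lemma f_neq0 n : (0 < n)%N -> f n != 0.
Proof. by case: n => // n _; exact: monic_neq0 (f_monic n). Qed.

Lemma f_coprime n : coprimep (f n) (f n.+1).
Proof.
elim: n => [|n IH]; first by rewrite coprimep_sym /= coprimep0 eqpxx.
by rewrite fS2 coprimep_addl_mul coprimep_sym.
Qed.

Lemma f_add m n : f (m + n.+1) = f m.+1 * f n.+1 + f m * f n.
Proof.
elim: n {-2}n (leqnn n) => [|k IH] n hn.
  move: hn; rewrite leqn0 => /eqP ->; rewrite addn1 /= mulr1 mulr0 addr0 //.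
case: n hn => [_|n hn]; first by rewrite addn1 /= mulr1 mulr0 addr0.
case: n hn => [_|n hn].
  by rewrite addn2 fS2 /=; ring.
have e : (m + n.+3 = (m + n.+1).+2)%N by rewrite !addnS.
rewrite e fS2 -!addnS IH // IH; last by apply: leq_trans (leqnSn _) _.
rewrite !fS2; ring.
Qed.

Lemma f_gcd_step m c : gcdp (f (m + c.+1)) (f c.+1) %= gcdp (f m) (f c.+1).
Proof.
rewrite f_add.
apply: eqp_trans (gcdpC _ _) _.
apply: eqp_trans (gcdp_addl_mul _ _ _) _.
apply: eqp_trans (Gauss_gcdpl _ _) _; first by rewrite coprimep_sym f_coprime.
exact: gcdpC.
Qed.

Lemma f_gcd a b : gcdp (f a) (f b) %= f (gcdn a b).
Proof.
elim: {a b}(a + b)%N {-2}a {-2}b (leqnn (a + b)%N) => [|k IH] a b hk.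
  move: hk; rewrite leqn0 addn_eq0 => /andP[/eqP -> /eqP ->].
  by rewrite gcdp0 gcdn0 eqpxx.
have H : forall a b, (b <= a)%N -> (a + b <= k.+1)%N ->
    gcdp (f a) (f b) %= f (gcdn a b).
  clear a b hk => a [|c] hba hs; first by rewrite gcdp0 gcdn0 eqpxx.
  have ea : a = ((a - c.+1) + c.+1)%N by rewrite subnK.
  rewrite ea; apply: eqp_trans (f_gcd_step _ _) _.
  rewrite gcdnC gcdnDr gcdnC; apply: IH.
  case: a ea hba hs => // a ea hba hs.
  rewrite subSS; move: hs; rewrite addSn addnS !ltnS => hs.
  lia.
case: (leqP b a) => hba; first exact: H.
apply: eqp_trans (gcdpC _ _) _; rewrite gcdnC; apply: H; first exact: ltnW.
by rewrite addnC.
Qed.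

Lemma f_deriv_aux n :
  (('X^2 + 4) * (f n.+1)^`() + 'X * f n.+1 = (n.+1)%:R * (f n.+2 + f n)) /\
  (('X^2 + 4) * (f n.+2)^`() + 'X * f n.+2 = (n.+2)%:R * (f n.+3 + f n.+1)).
Proof.
elim: n => [|n [H0 H1]].
  rewrite /= !derivE; split; ring.
split => //.
have E : forall a b : {poly int}, a - b = 0 -> a = b.
  by move=> a b /eqP; rewrite subr_eq0 => /eqP.
apply: E.
have -> : ('X^2 + 4) * (f n.+3)^`() + 'X * f n.+3 - (n.+3)%:R * (f n.+4 + f n.+2)
   = 'X * (('X^2 + 4) * (f n.+2)^`() + 'X * f n.+2 - (n.+2)%:R * (f n.+3 + f n.+1))
     + (('X^2 + 4) * (f n.+1)^`() + 'X * f n.+1 - (n.+1)%:R * (f n.+2 + f n)).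
  rewrite [f n.+4]fS2 [f n.+3]fS2 [f n.+2]fS2 !derivE; ring.
by rewrite H0 H1 !subrr; ring.
Qed.

Lemma dvdp_natmul (d p : {poly int}) k : (0 < k)%N -> (d %| p *+ k) = (d %| p).
Proof.
by move=> hk; rewrite -scaler_nat dvdpZr // pnatr_eq0 -lt0n.
Qed.

Lemma dvdp_deriv_sq (r p : {poly int}) : r * r %| p -> r %| p^`().
Proof.
case/Pdiv.Idomain.dvdpP => [[c q] /= cn0 e].
have : r %| (c *: p)^`().
  rewrite e !derivE; apply: dvdp_add; first by rewrite mulrA dvdp_mull ?dvdpp.
  apply: dvdp_mull; apply: dvdp_add; first by apply: dvdp_mull; exact: dvdpp.
  by apply: dvdp_mulr; exact: dvdpp.
by rewrite derivZ dvdpZr.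
Qed.

Lemma f_sqf n r : (0 < n)%N -> r * r %| f n -> size r == 1%N.
Proof.
case: n => // m _ hr.
have h1 : r %| f m.+1 by apply: dvdp_trans hr; exact: dvdp_mulIl.
have h2 : r %| (f m.+1)^`() by exact: dvdp_deriv_sq.
have h3 : r %| f m.+2 + f m.
  rewrite -(@dvdp_natmul r _ m.+1 (ltn0Sn m)) -mulr_natl.
  have [<- _] := f_deriv_aux m.
  by apply: dvdp_add; apply: dvdp_mull.
have h4 : r %| f m.+2 - f m.
  have -> : f m.+2 - f m = 'X * f m.+1 by rewrite fS2; ring.
  exact: dvdp_mull.
have h5 : r %| f m.+2.
  rewrite -(@dvdp_natmul r _ 2 (ltn0Sn 1)).
  have -> : f m.+2 *+ 2 = (f m.+2 + f m) + (f m.+2 - f m) by ring.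
  exact: dvdp_add.
have := f_coprime m.+1.
move/(coprimep_dvdl h5)/(coprimep_dvdr h1).
by rewrite coprimepp.
Qed.

Lemma int_unit_sq (a b : int) : a * b = 1 -> a * a = 1.
Proof.
rewrite mulrC => /intUnitRing.unitzPl; rewrite qualifE => /pred2P[] ->; by [].
Qed.

Definition mnorm (p : {poly int}) :=
  lead_coef (zprimitive p) *: zprimitive p.

Lemma mnormP p m : m \is monic -> p %| m -> mnorm p \is monic /\ mnorm p %= p.
Proof.
move=> mm /dvdpP_int [r e].
have pn0 : p != 0.
  apply/eqP => p0; move: (monic_neq0 mm).
  by rewrite e p0 zprimitive0 mul0r eqxx.
have l1 : lead_coef (zprimitive p) * lead_coef r = 1.
  by rewrite -lead_coefM -e; apply/monicP.
have l0 : lead_coef (zprimitive p) != 0.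
  by apply/eqP => h; move: l1; rewrite h mul0r.
split; first by apply/monicP; rewrite lead_coefZ (int_unit_sq _ _ l1).
apply: eqp_trans (eqp_scale _ l0) _.
rewrite {2}[p]zpolyEprim eqp_sym; apply: eqp_scale.
by rewrite zcontents_eq0.
Qed.

Fixpoint Pr n := if n is k.+1 then Pr k * f k.+1 else 1.

Lemma coprimep_Pr p n :
  coprimep p (Pr n) <-> (forall k, (0 < k <= n)%N -> coprimep p (f k)).
Proof.
elim: n => [|n IH]; rewrite [Pr _]/=.
  by split => [_ k /andP[h1 h2]|_]; [move: (leq_trans h1 h2) | apply: coprimep1].
rewrite coprimepMr; split.
  case/andP => /IH h hf k /andP[k0]; rewrite leq_eqVlt => /orP[/eqP ->//|kn].
  by apply: h; rewrite k0 -ltnS.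
move=> h; apply/andP; split; last by apply: (h n.+1); rewrite ltn0Sn leqnn.
by apply/IH => k /andP[k0 kn]; apply: h; rewrite k0 (leq_trans kn).
Qed.

Lemma f_dvd_Pr k n : (0 < k <= n)%N -> f k %| Pr n.
Proof.
elim: n => [/andP[h1 h2]|n IH /andP[k0]]; first by move: (leq_trans h1 h2).
rewrite leq_eqVlt => /orP[/eqP -> /=|kn]; first exact: dvdp_mulIr.
by apply: dvdp_mulr; apply: IH; rewrite k0 -ltnS.
Qed.

Definition Q n := Pr n.-1.
Definition psi0 n := gdcop (Q n) (f n).
Definition psi n := mnorm (psi0 n).

Lemma psi_aux n : (0 < n)%N -> psi n \is monic /\ psi n %= psi0 n.
Proof.
case: n => // n _; apply: mnormP (f_monic n) _; exact: dvdp_gdco.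
Qed.

Lemma psi_monic n : (0 < n)%N -> psi n \is monic.
Proof. by case/psi_aux. Qed.

Lemma psi_dvd n : (0 < n)%N -> psi n %| f n.
Proof.
by move=> n0; case: (@psi_aux n n0) => _ /eqp_dvdl ->; exact: dvdp_gdco.
Qed.

Lemma psi_cop n k : (0 < k < n)%N -> coprimep (psi n) (f k).
Proof.
case/andP => k0 kn; have n0 : (0 < n)%N by apply: leq_trans kn.
case: (@psi_aux n n0) => _ /eqp_coprimepl ->.
have : coprimep (psi0 n) (Q n) by apply: coprimep_gdco; exact: f_neq0.
move/coprimep_Pr; apply; rewrite k0 /=.
by case: n kn {n0} => // n; rewrite ltnS.
Qed.

Lemma psi_max n d : (0 < n)%N -> d %| f n -> coprimep d (Q n) -> d %| psi n.
Proof.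
move=> n0 hd hc; case: (@psi_aux n n0) => _ /eqp_dvdr ->.
rewrite /psi0; case: gdcopP => r _ _; apply => //.
Qed.

Lemma f_dvdn d n : (d %| n)%N -> f d %| f n.
Proof.
move=> /gcdn_idPl hd; have := f_gcd d n; rewrite hd => /eqp_dvdl <-.
exact: dvdp_gcdr.
Qed.

Lemma f_common r a b : r %| f a -> r %| f b -> r %| f (gcdn a b).
Proof.
move=> ha hb; rewrite -(eqp_dvdr _ (f_gcd a b)) dvdp_gcd ha hb //.
Qed.

Lemma psi_pair d e : (0 < d)%N -> (0 < e)%N -> d != e -> coprimep (psi d) (psi e).
Proof.
wlog de : d e / (d < e)%N.
  move=> H d0 e0 ne; case: (ltngtP d e) => h; first exact: H.
    by rewrite coprimep_sym; apply: H => //; rewrite eq_sym.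
  by rewrite h eqxx in ne.
move=> d0 e0 _; rewrite coprimep_sym.
apply: (coprimep_dvdl (@psi_dvd d d0)); by apply: psi_cop; rewrite d0 de.
Qed.

Arguments f_dvdn {d n}.
Arguments psi_dvd {n}.
Arguments psi_monic {n}.
Arguments psi_max {n d}.
Arguments f_sqf {n r}.
Arguments f_common {r a b}.
Arguments psi_cop {n k}.
Arguments psi_pair {d e}.

Section BigHelp.
Variable T : eqType.

Lemma coprimep_prodr (p : {poly int}) (s : seq T) (F : T -> {poly int}) :
  (forall x, x \in s -> coprimep p (F x)) -> coprimep p (\prod_(x <- s) F x).
Proof.
elim: s => [|x s IH] h; first by rewrite big_nil coprimep1.
rewrite big_cons coprimepMr h ?mem_head //= IH // => y hy.
by apply: h; rewrite in_cons hy orbT.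
Qed.

Lemma dvdp_prod_mem (s : seq T) (F : T -> {poly int}) x :
  x \in s -> F x %| \prod_(y <- s) F y.
Proof. by move=> hx; rewrite (big_rem x hx) /=; exact: dvdp_mulIl. Qed.

Lemma prod_dvd (s : seq T) (F : T -> {poly int}) p :
  uniq s -> (forall x, x \in s -> F x %| p) ->
  (forall x y, x \in s -> y \in s -> x != y -> coprimep (F x) (F y)) ->
  \prod_(x <- s) F x %| p.
Proof.
elim: s => [|x s IH] /=; first by rewrite big_nil dvd1p.
case/andP => xs us hd hc; rewrite big_cons Gauss_dvdp.
  rewrite hd ?mem_head //= IH // => [y hy|y z hy hz]; first by apply: hd; rewrite in_cons hy orbT.
  by apply: hc; rewrite in_cons ?hy ?hz orbT.
apply: coprimep_prodr => y hy; apply: hc; rewrite ?mem_head ?in_cons ?hy ?orbT //.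
by apply: contraNneq xs => ->.
Qed.

End BigHelp.

Lemma mem_div_pos d n : (0 < n)%N -> d \in divisors n -> (0 < d)%N /\ (d %| n)%N.
Proof.
move=> n0; rewrite -dvdn_divisors // => dn; split => //; exact: dvdn_gt0 n0 dn.
Qed.

Arguments mem_div_pos {d n}.

Lemma monic_size1 (g : {poly int}) : size g == 1%N -> lead_coef g = 1 -> g = 1.
Proof.
move=> /eqP sg lg; rewrite [g]size1_polyC ?sg //.
by move: lg; rewrite lead_coefE sg => ->.
Qed.

Lemma f_prod n : (0 < n)%N -> f n = \prod_(d <- divisors n) psi d.
Proof.
move=> n0; set Pi := \prod_(d <- divisors n) psi d.
have Pim : Pi \is monic.
  rewrite /Pi big_seq; apply: monic_prod => d hd.
  by case: (mem_div_pos n0 hd) => *; exact: psi_monic.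
have hdiv : Pi %| f n.
  apply: prod_dvd; first exact: divisors_uniq.
    move=> d hd; case: (mem_div_pos n0 hd) => d0 dn.
    exact: dvdp_trans (psi_dvd d0) (f_dvdn dn).
  move=> d e hd he; case: (mem_div_pos n0 hd) => d0 _.
  case: (mem_div_pos n0 he) => e0 _; exact: psi_pair.
case: (dvdpP_int hdiv) => g; rewrite zprimitive_monic // => eg.
have fm : f n \is monic by case: n n0 {Pi Pim hdiv eg} => // n _; exact: f_monic.
suff sg : size g == 1%N.
  rewrite eg (@monic_size1 g sg) ?mulr1 //.
  by move/monicP: fm; rewrite eg lead_coefM (monicP Pim) mul1r.
apply/negPn/negP => hg.
have hS : exists e, (0 < e)%N && ~~ coprimep g (f e).
  exists n; rewrite n0 /=; apply/negP => hc.
  have : g %| f n by rewrite eg; exact: dvdp_mulIr.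
  by move/coprimep_dvdl/(_ hc); rewrite coprimepp (negPf hg).
case: (ex_minnP hS) => e /andP[e0 he] hmin.
set r := gcdp g (f e).
have hr : size r != 1%N by rewrite -coprimep_def.
have rg : r %| g by exact: dvdp_gcdl.
have rfe : r %| f e by exact: dvdp_gcdr.
have rfn : r %| f n by rewrite eg; apply: dvdp_mull.
have ncop : forall k, r %| f k -> ~~ coprimep g (f k).
  move=> k rk; apply/negP => /(coprimep_dvdr rg) /(coprimep_dvdl rk).
  by rewrite coprimepp (negPf hr).
have g0 : (0 < gcdn e n)%N by rewrite gcdn_gt0 e0.
have : (e <= gcdn e n)%N by apply: hmin; rewrite g0 /=; apply: ncop; exact: f_common.
move=> hle.
have en : (e %| n)%N.
  apply/gcdn_idPl; apply/eqP; rewrite eqn_leq hle andbT.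
  by apply: dvdn_leq e0 (dvdn_gcdl _ _).
have rQ : coprimep r (Q e).
  apply/coprimep_Pr => k /andP[k0 ke].
  have : ~~ ((0 < k)%N && ~~ coprimep g (f k)).
    apply/negP => /hmin; case: e e0 ke {he hmin r hr rg rfe rfn ncop hle en g0} => // e _ /= ke.
    by rewrite leqNgt ltnS ke.
  rewrite k0 /= negbK; exact: coprimep_dvdr rg.
have rpsi : r %| psi e by exact: psi_max.
have rPi : r %| Pi.
  apply: dvdp_trans rpsi _; apply: dvdp_prod_mem; rewrite -dvdn_divisors //.
have : r * r %| f n by rewrite eg mulrC; exact: dvdp_mul.
by move/(f_sqf n0); rewrite (negPf hr).
Qed.

Arguments f_prod {n}.

Lemma irr_factor (g : {poly int}) : (1 < size g)%N -> exists2 r, irreducible_poly r & r %| g.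
Proof.
elim: {g}(size g) {-2}g (leqnn (size g)) => [|k IH] g hk hg.
  by move: (leq_trans hg hk).
case: (classic (exists q : {poly int}, [/\ size q != 1%N, q %| g & ~~ (q %= g)])) => [[q [h1 h2 h3]]|hn].
  have g0 : g != 0 by rewrite -size_poly_gt0 (ltn_trans _ hg).
  have q0 : q != 0 by apply: contraNneq g0 => q0; move: h2; rewrite q0 dvd0p.
  have sq : (size q < size g)%N.
    rewrite ltn_neqAle dvdp_leq // andbT dvdp_size_eqp //.
  have [r hr rq] : exists2 r, irreducible_poly r & r %| q.
    apply: IH; first by rewrite -ltnS (leq_trans sq hk).
    by rewrite ltn_neqAle eq_sym h1 size_poly_gt0.
  by exists r => //; exact: dvdp_trans rq h2.
exists g => //; split => // q h1 h2; apply/negPn/negP => h3; apply: hn; exists q.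
by split.
Qed.

Lemma irr_coprime (q p : {poly int}) : irreducible_poly q -> ~~ (q %| p) -> coprimep q p.
Proof.
move=> hq hn; rewrite coprimep_def; apply/negPn/negP => hs.
have := hq _ hs (dvdp_gcdl q p) => /eqp_dvdl h.
by move: (dvdp_gcdr q p); rewrite h (negPf hn).
Qed.

Lemma irr_eqp (r r' : {poly int}) : irreducible_poly r -> r' %= r -> irreducible_poly r'.
Proof.
move=> hr he; split; first by rewrite (eqp_size he); case: hr.
move=> q hq hqr; have hqr' : q %| r by rewrite -(eqp_dvdr _ he).
by apply: eqp_trans (hr q hq hqr') _; rewrite eqp_sym.
Qed.

Lemma s_psi n s : (0 < n)%N -> fibotomic_factors n s -> \prod_(q <- s) q = psi n.
Proof.
move=> n0 [us hs]; set P := \prod_(q <- s) q.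
have fm : f n \is monic by case: n n0 {hs P} => // n _; exact: f_monic.
have Pm : P \is monic.
  by rewrite /P big_seq; apply: monic_prod => q /hs [].
have hcop : forall q q', q \in s -> q' \in s -> q != q' -> coprimep q q'.
  move=> q q' /hs [qm qi _ _] /hs [q'm q'i _ _] ne; apply: irr_coprime => //.
  apply/negP => hd; have : q %= q' by apply: q'i => //; case: qi => /= h _; rewrite neq_ltn h orbT.
  by rewrite eqp_monic // (negPf ne).
have hPd : P %| psi n.
  apply: (psi_max n0).
    apply: prod_dvd => // q /hs []; by [].
  rewrite coprimep_sym; apply: coprimep_prodr => q /hs [_ qi _ hk].
  rewrite coprimep_sym; apply/coprimep_Pr => k /andP[k0 kn].
  apply: irr_coprime => //; apply: hk; rewrite k0 /=.
  by case: n n0 kn {hs P Pm fm hcop} => // n _; rewrite ltnS.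
case: (dvdpP_int hPd) => g; rewrite zprimitive_monic // => eg.
suff sg : size g == 1%N.
  rewrite eg (@monic_size1 g sg) ?mulr1 //.
  by move/monicP: (psi_monic n0); rewrite eg lead_coefM (monicP Pm) mul1r.
apply/negPn/negP => hg.
have g0 : g != 0.
  by apply/eqP => g0; move: (monic_neq0 (psi_monic n0)); rewrite eg g0 mulr0 eqxx.
have [r ri rg] : exists2 r, irreducible_poly r & r %| g.
  by apply: irr_factor; rewrite ltn_neqAle eq_sym hg size_poly_gt0.
have rpsi : r %| psi n by rewrite eg; exact: dvdp_mull.
have rfn : r %| f n by exact: dvdp_trans rpsi (psi_dvd n0).
have [r'm r'e] := @mnormP r (f n) fm rfn.
set r' := mnorm r in r'm r'e.
have r'i : irreducible_poly r' by exact: irr_eqp ri r'e.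
have r's : (1 < size r')%N by case: r'i.
have r'psi : r' %| psi n by rewrite (eqp_dvdl _ r'e).
have r'g : r' %| g by rewrite (eqp_dvdl _ r'e).
have r'in : r' \in s.
  apply/hs; split => //; first exact: dvdp_trans r'psi (psi_dvd n0).
  move=> k /andP[k0 kn]; apply/negP => hk.
  have : coprimep r' (f k) by apply: coprimep_dvdr r'psi (psi_cop _); rewrite k0.
  move/(coprimep_dvdl hk); rewrite coprimepp => /eqP h.
  by rewrite h in r's.
have r'P : r' %| P by exact: dvdp_prod_mem.
have : r' * r' %| f n.
  apply: dvdp_trans (psi_dvd n0); rewrite eg; exact: dvdp_mul.
move/(f_sqf n0) => /eqP h; by rewrite h in r's.
Qed.

Definition lam (e : nat) : nat := if primes e is [:: p] then p else 1%N.

Lemma primes_single e r : (0 < e)%N -> primes e = [:: r] -> e = (r ^ logn r e)%N.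
Proof.
move=> e0 pe; rewrite {1}(prod_prime_decomp e0) prime_decompE pe /=.
by rewrite big_cons big_nil muln1.
Qed.

Lemma lam_pow p k : prime p -> (0 < k)%N -> lam (p ^ k) = p.
Proof. by move=> pp k0; rewrite /lam primesX // primes_prime. Qed.

Lemma LAM m : (0 < m)%N -> (\prod_(e <- divisors m) lam e)%N = m.
Proof.
elim/ltn_ind: m => m IH m0.
case: (leqP m 1) => m1.
  have -> : m = 1%N by apply/eqP; rewrite eqn_leq m1 m0.
  by rewrite (_ : divisors 1 = [:: 1%N]) // big_seq1.
set p := pdiv m; have pp : prime p by exact: pdiv_prime.
have pm : (p %| m)%N by exact: pdiv_dvd.
set m' := (m %/ p)%N.
have em : m = (m' * p)%N by rewrite divnK.
have m'0 : (0 < m')%N by rewrite divn_gt0 ?prime_gt0 // dvdn_leq.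
have m'm : (m' < m)%N by rewrite ltn_Pdiv ?prime_gt1.
have m'd : (m' %| m)%N by apply/dvdnP; exists p; rewrite mulnC -em.
rewrite (bigID (fun e => (e %| m')%N)) /=.
have -> : (\prod_(e <- divisors m | (e %| m')%N) lam e = m')%N.
  rewrite -big_filter -{2}(IH m' m'm m'0); apply: perm_big.
  apply: uniq_perm; first exact: filter_uniq (divisors_uniq _).
    exact: divisors_uniq.
  move=> e; rewrite mem_filter -!dvdn_divisors //.
  by apply/andP/idP => [[]//|h]; split => //; exact: dvdn_trans h m'd.
set k := logn p m.
have lk : k = (logn p m' + 1)%N.
  by rewrite /k em lognM ?(prime_gt0 pp) // (logn_prime _ pp) eqxx.
have k0 : (0 < k)%N by rewrite lk addn1.
have qm : (p ^ k %| m)%N by rewrite pfactor_dvdn.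
have qm' : ~~ (p ^ k %| m')%N by rewrite pfactor_dvdn // -ltnNge lk addn1.
rewrite -big_filter (bigD1_seq (p ^ k)%N) /=; last exact: filter_uniq (divisors_uniq _).
  2: by rewrite mem_filter qm' -dvdn_divisors.
rewrite lam_pow // big1_seq ?muln1 //.
move=> e /andP[ne]; rewrite mem_filter -dvdn_divisors // => /andP[em' ed].
rewrite /lam; case pe: (primes e) => [|r [|]] //.
have e0 : (0 < e)%N by exact: dvdn_gt0 m0 ed.
have ee := @primes_single e r e0 pe.
have rp : prime r by have := mem_primes r e; rewrite pe mem_seq1 eqxx => /esym/and3P[].
have a0 : (0 < logn r e)%N by rewrite logn_gt0 pe mem_seq1.
case: (eqVneq r p) => [rpe|rne].
  exfalso; move: ed em' ne; rewrite ee rpe pfactor_dvdn // pfactor_dvdn // -/k lk.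
  move=> h1 h2 h3; have ea : logn p e = (logn p m' + 1)%N.
    by move: h1 h2; rewrite -ltnNge; lia.
  by rewrite ea eqxx in h3.
exfalso; move/negP: em'; apply.
have cop : coprime e p.
  rewrite ee coprimeXl // prime_coprime // dvdn_prime2 //.
move: ed; rewrite {1}em Gauss_dvdl //.
Qed.

Definition W (e : nat) : nat := if odd e then 1%N else lam e./2.

Lemma NT2 m : (0 < m)%N -> (\prod_(e <- divisors m.*2) W e)%N = m.
Proof.
move=> m0; have m20 : (0 < m.*2)%N by rewrite double_gt0.
rewrite (bigID odd) /= big1 ?mul1n; last by move=> e oe; rewrite /W oe.
rewrite -big_filter -{2}(@LAM m m0).
rewrite (perm_big (map double (divisors m))).
  by rewrite big_map; apply: eq_bigr => e _; rewrite /W odd_double doubleK.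
apply: uniq_perm; first exact: filter_uniq (divisors_uniq _).
  by rewrite map_inj_uniq ?divisors_uniq //; exact: double_inj.
move=> e; rewrite mem_filter -dvdn_divisors //; apply/andP/mapP.
  case=> oe ed; exists e./2; last by have := odd_double_half e; rewrite (negPf oe) add0n.
  rewrite -dvdn_divisors // -(@dvdn_pmul2r 2) // !muln2.
  by have := odd_double_half e; rewrite (negPf oe) add0n => ->.
case=> d; rewrite -dvdn_divisors // => dm ->; rewrite odd_double; split => //.
by rewrite -!muln2 dvdn_pmul2r.
Qed.

Lemma f_parity m :
  (exists h, f m.*2 = 'X * h /\ h.[0] = m%:R) /\ (f m.*2.+1).[0] = 1.
Proof.
elim: m => [|m [[h [eh vh]] vo]].
  by split; [exists 0; rewrite mulr0 horner0 | rewrite /= hornerC].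
have e2 : f m.+1.*2 = 'X * (f m.*2.+1 + h) by rewrite doubleS fS2 eh mulrDr.
split.
  by exists (f m.*2.+1 + h); split => //; rewrite hornerD vo vh -natr1 addrC.
by rewrite doubleS fS2 e2 !hornerE vo; ring.
Qed.

Lemma psi1 : psi 1 = 1.
Proof.
by have := @f_prod 1 (ltn0Sn 0); rewrite (_ : divisors 1 = [:: 1%N]) // big_seq1 /= => <-.
Qed.

Lemma psi2 : psi 2 = 'X.
Proof.
have := @f_prod 2 (ltn0Sn 1); rewrite (_ : divisors 2 = [:: 1%N; 2%N]) //.
by rewrite big_cons big_seq1 psi1 mul1r /= mulr1 addr0 => <-.
Qed.

Definition Vn d : nat := if d == 2%N then 0%N else W d.

Lemma psi_val d : (0 < d)%N -> (psi d).[0] = (Vn d)%:R.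
Proof.
elim/ltn_ind: d => d IH d0.
have IHe : forall e, e \in divisors d -> e != d -> (psi e).[0] = (Vn e)%:R.
  move=> e he ne; case: (mem_div_pos d0 he) => e0 ed; apply: IH e0.
  by rewrite ltn_neqAle ne dvdn_leq.
have ev : (f d).[0] = \prod_(e <- divisors d) (psi e).[0].
  by rewrite {1}(f_prod d0) horner_prod.
have dD : d \in divisors d by exact: divisors_id.
have uD := divisors_uniq d.
case: (eqVneq d 1) => [->|d1]; first by rewrite psi1 hornerC.
case: (eqVneq d 2) => [->|d2]; first by rewrite psi2 hornerX.
have hd := odd_double_half d.
case od: (odd d).
  have dd : d = (d./2.*2).+1 by rewrite -[in LHS]hd od add1n.
  move: ev; rewrite (bigD1_seq d) //= big1_seq ?mulr1.
    case: (f_parity d./2) => _; rewrite -dd => -> <-.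
    by rewrite /Vn (negPf d2) /W od.
  move=> e /andP[ne he]; rewrite IHe // /Vn.
  have oe : odd e.
    apply/negPn/negP => oe; move: od; rewrite -dvdn2 in oe.
    case: (mem_div_pos d0 he) => _ ed.
    by rewrite -[odd d]negbK -dvdn2 (dvdn_trans oe ed).
  have e2 : e != 2%N by apply: contraTneq oe => ->.
  by rewrite (negPf e2) /W oe.
set m := d./2.
have dd : d = m.*2 by rewrite -[in LHS]hd od add0n.
have m0 : (0 < m)%N by rewrite -double_gt0 -dd.
have [[h [eh vh]] _] := f_parity m; rewrite -dd in eh.
have twoD : 2%N \in divisors d by rewrite -dvdn_divisors // dvdn2 od.
have eh2 : h = \prod_(e <- divisors d | e != 2%N) psi e.
  have X0 : ('X : {poly int}) != 0 by rewrite polyX_eq0.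
  apply: (mulfI X0); rewrite -eh (f_prod d0).
  by rewrite (bigD1_seq 2%N) //= psi2.
have := vh; rewrite eh2 horner_prod -big_filter.
set L := filter _ _.
have dL : d \in L by rewrite mem_filter d2.
have uL : uniq L by exact: filter_uniq.
rewrite (bigD1_seq d) //=.
have -> : \prod_(e <- L | e != d) (psi e).[0] = (\prod_(e <- L | e != d) W e)%:R.
  rewrite natr_prod big_seq_cond [in RHS]big_seq_cond; apply: eq_bigr => e.
  case/andP; rewrite mem_filter => /andP[e2 he] ne; rewrite IHe //.
  by rewrite /Vn (negPf e2).
have := @NT2 m m0; rewrite -dd (bigD1_seq 2%N) //= {1}/W /= mul1n -big_filter -/L.
rewrite (bigD1_seq d) //= => hm.
rewrite /Vn (negPf d2); set X := (\prod_(e <- L | e != d) W e)%N.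
rewrite -{1}hm natrM => /mulIf; apply.
have hX : (W d * X)%N = m by exact: hm.
rewrite pnatr_eq0; apply/negP => /eqP X0; move: hX; rewrite X0 muln0 => hm0.
by move: m0; rewrite -hm0.
Qed.

Arguments s_psi {n s}.
Arguments psi_val {d}.

Theorem mainTheorem5 (n : nat) (s : seq {poly int}) :
  (0 < n)%N -> fibotomic_factors n s ->
  let v := (\prod_(q <- s) q).[0] in
  [/\ (n = 2%N -> v = 0),
      (forall (p a : nat), prime p -> (0 < a)%N -> n = (2 * p ^ a)%N ->
         v = p%:Z)
    & (n <> 2%N ->
       (~ exists p a : nat, [/\ prime p, (0 < a)%N & n = (2 * p ^ a)%N]) ->
       v = 1)].
Proof.
move=> n0 hs v; have hv : v = (Vn n)%:R by rewrite /v (s_psi n0 hs) (psi_val n0).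
split.
- by move=> e; rewrite hv e.
- move=> p a pp a0 en; rewrite hv /Vn.
  have pa1 : (1 < p ^ a)%N.
    by rewrite -(expn0 p) ltn_exp2l ?prime_gt1.
  have -> : (n == 2%N) = false.
    by apply/negbTE; apply/eqP => h; rewrite en in h; move: pa1 h; lia.
  by rewrite /W en mul2n odd_double doubleK lam_pow // natz.
- move=> n2 hne; rewrite hv /Vn; have -> : (n == 2%N) = false by apply/eqP.
  rewrite /W; case on: (odd n) => //.
  have hd := odd_double_half n; rewrite on add0n in hd.
  rewrite /lam; case pe: (primes n./2) => [|r [|]] //.
  exfalso; apply: hne.
  have m0 : (0 < n./2)%N by rewrite -double_gt0 hd.
  have ee := @primes_single _ r m0 pe.
  have rp : prime r by have := mem_primes r n./2; rewrite pe mem_seq1 eqxx => /esym/and3P[].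
  exists r, (logn r n./2); split => //; first by rewrite logn_gt0 pe mem_seq1.
  by rewrite -ee mul2n hd.
Qed.
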